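(* Let $H=\ell^2(\mathbb{N})$ with its standard orthonormal basis, $K(H)$ the compact operators on $H$ represented by infinite matrices, and let $A=(a_{ij})\in\ell^\infty(\mathbb{N}^2)$ be such that $S_A(T)=A\circ T$ is a nonzero map $S_A\colon K(H)\to K(H)$. Then $S_A$ is multiplicative (i.e. $S_A(BC)=S_A(B)S_A(C)$ for all $B,C\in K(H)$) if and only if every column of $A$ is a scalar multiple of the first column of $A$ and $a_{ii}=1$ for all $i$.
   Context: $A\circ T$ is the entrywise product of $A$ with the matrix of $T$; $\ell^\infty(\mathbb{N}^2)$ denotes infinite matrices with uniformly bounded entries. *)

(* Defs.v *)
From Stdlib Require Import Reals.
From Coquelicot Require Import Coquelicot.
Open Scope R_scope.

(* Infinite matrices indexed by nat x nat (standard basis of l^2(N), index 0 first). *)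
Definition mat := nat -> nat -> C.

Definition ex_cseries (a : nat -> C) : Prop :=
  ex_series (fun n => fst (a n)) /\ ex_series (fun n => snd (a n)).
Definition CSeries (a : nat -> C) : C :=
  (Series (fun n => fst (a n)), Series (fun n => snd (a n))).

Definition l2 (x : nat -> C) : Prop := ex_series (fun i => (Cmod (x i)) ^ 2).
Definition l2norm (x : nat -> C) : R := sqrt (Series (fun i => (Cmod (x i)) ^ 2)).

Definition op_bounded_by (T : mat) (M : R) : Prop :=
  forall x : nat -> C, l2 x ->
    (forall i, ex_cseries (fun j => Cmult (T i j) (x j))) /\
    l2 (fun i => CSeries (fun j => Cmult (T i j) (x j))) /\
    l2norm (fun i => CSeries (fun j => Cmult (T i j) (x j))) <= M * l2norm x.

Definition fin_supp (F : mat) : Prop :=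
  exists n : nat, forall i j, (n <= i)%nat \/ (n <= j)%nat -> F i j = RtoC 0.

(* K(H): compact operators, as the operator-norm closure of the finite matrices
   (= closure of the finite-rank operators on l^2(N)). *)
Definition compact_mat (T : mat) : Prop :=
  forall eps : R, 0 < eps ->
    exists F : mat, fin_supp F /\ op_bounded_by (fun i j => Cminus (T i j) (F i j)) eps.

Definition matmul (B C : mat) : mat := fun i k => CSeries (fun j => Cmult (B i j) (C j k)).

Definition schur (A T : mat) : mat := fun i j => Cmult (A i j) (T i j).

Definition linfty (A : mat) : Prop := exists M : R, forall i j, Cmod (A i j) <= M.

(* Main.v *)
Require Import Defs.
From Stdlib Require Import Reals Lia Lra FunctionalExtensionality.
From Coquelicot Require Import Coquelicot.
Open Scope R_scope.

Lemma Ceq (a b : C) : fst a = fst b -> snd a = snd b -> a = b.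
Proof. destruct a, b; simpl; intros; subst; auto. Qed.

Lemma sum_single (a : nat -> R) j :
  (forall l, l <> j -> a l = 0) -> forall n, sum_n a n = if (n <? j)%nat then 0 else a j.
Proof.
  intros H n. induction n.
  - rewrite sum_O. destruct j; simpl. reflexivity. apply H; lia.
  - rewrite sum_Sn, IHn. unfold plus; simpl.
    destruct (Nat.ltb_spec n j), (Nat.ltb_spec (S n) j).
    + rewrite H by lia. ring.
    + assert (S n = j) by lia. subst. ring.
    + lia.
    + rewrite (H (S n)) by lia. ring.
Qed.

Lemma is_series_single (a : nat -> R) j :
  (forall l, l <> j -> a l = 0) -> is_series a (a j).
Proof.
  intros H. unfold is_series. 
  apply (filterlim_ext_loc (fun _ => a j)).
  - exists j. intros n Hn. symmetry. pose proof (sum_single a j H n) as E.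
    destruct (Nat.ltb_spec n j); [lia|]. exact E.
  - apply filterlim_const.
Qed.

Lemma Series_single (a : nat -> R) j :
  (forall l, l <> j -> a l = 0) -> Series a = a j.
Proof. intros H; apply is_series_unique, is_series_single, H. Qed.

Lemma ex_series_single (a : nat -> R) j :
  (forall l, l <> j -> a l = 0) -> ex_series a.
Proof. intros H; eexists; apply is_series_single, H. Qed.

Lemma CSeries_single (a : nat -> C) j :
  (forall l, l <> j -> a l = RtoC 0) -> CSeries a = a j.
Proof.
  intros H. unfold CSeries. apply Ceq; simpl.
  - apply (Series_single (fun n => fst (a n))). intros l Hl; rewrite H; auto.
  - apply (Series_single (fun n => snd (a n))). intros l Hl; rewrite H; auto.
Qed.

Lemma CSeries_scal (a : C) (z : nat -> C) : ex_cseries z ->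
  CSeries (fun j => Cmult a (z j)) = Cmult a (CSeries z).
Proof.
  intros [H1 H2]. unfold CSeries, Cmult. apply Ceq; simpl.
  - rewrite (Series_minus (fun n => fst a * fst (z n)) (fun n => snd a * snd (z n))).
    + rewrite !Series_scal_l; ring.
    + first [exact (ex_series_scal_l _ _ H1) | exact (ex_series_scal_l _ _ H2)].
    + first [exact (ex_series_scal_l _ _ H1) | exact (ex_series_scal_l _ _ H2)].
  - rewrite (Series_plus (fun n => fst a * snd (z n)) (fun n => snd a * fst (z n))).
    + rewrite !Series_scal_l; ring.
    + first [exact (ex_series_scal_l _ _ H1) | exact (ex_series_scal_l _ _ H2)].
    + first [exact (ex_series_scal_l _ _ H1) | exact (ex_series_scal_l _ _ H2)].
Qed.
Lemma ex_series_tail (a b : nat -> R) n :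
  (forall j, (n <= j)%nat -> a j = b j) -> ex_series a -> ex_series b.
Proof.
  intros H Ha. apply (ex_series_incr_n b n).
  apply (ex_series_incr_n a n) in Ha.
  revert Ha. apply ex_series_ext. intros k. apply H. lia.
Qed.

Lemma compact_split (T : mat) : compact_mat T ->
  exists G n, op_bounded_by G 1 /\ forall i j, (n <= i \/ n <= j)%nat -> T i j = G i j.
Proof.
  intros H. destruct (H 1 Rlt_0_1) as [F [[n Hn] HG]].
  exists (fun i j => Cminus (T i j) (F i j)), n. split; auto.
  intros i j Hij. rewrite Hn by auto. apply Ceq; simpl; ring.
Qed.

Definition ek (k : nat) : nat -> C := fun j => if Nat.eqb j k then RtoC 1 else RtoC 0.

Lemma l2_ek k : l2 (ek k).
Proof.
  unfold l2. apply (ex_series_single _ k). intros l Hl. unfold ek.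
  destruct (Nat.eqb_spec l k); [contradiction|]. rewrite Cmod_0. ring.
Qed.

Lemma column_l2 (T : mat) k : compact_mat T -> l2 (fun j => T j k).
Proof.
  intros H. destruct (compact_split T H) as [G [n [HG HT]]].
  destruct (HG (ek k) (l2_ek k)) as [_ [Hl _]].
  assert (E : forall i, CSeries (fun j => Cmult (G i j) (ek k j)) = G i k).
  { intros i. rewrite (CSeries_single _ k).
    - unfold ek. rewrite Nat.eqb_refl. apply Cmult_1_r.
    - intros l Hl'. unfold ek. destruct (Nat.eqb_spec l k); [contradiction|]. apply Cmult_0_r. }
  unfold l2 in *. apply (ex_series_tail (fun i => Cmod (G i k) ^ 2) _ n).
  - intros j Hj. rewrite HT by auto. reflexivity.
  - revert Hl. apply ex_series_ext. intros i. rewrite E. reflexivity.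
Qed.

Lemma row_conv (T : mat) i x : compact_mat T -> l2 x -> ex_cseries (fun j => Cmult (T i j) (x j)).
Proof.
  intros H Hx. destruct (compact_split T H) as [G [n [HG HT]]].
  destruct (HG x Hx) as [Hc _]. destruct (Hc i) as [H1 H2]. split.
  - refine (ex_series_tail _ _ n _ H1). intros j Hj. rewrite HT by auto. reflexivity.
  - refine (ex_series_tail _ _ n _ H2). intros j Hj. rewrite HT by auto. reflexivity.
Qed.

Lemma Series_zero : Series (fun _ => 0) = 0.
Proof. apply (Series_single (fun _ => 0) 0). auto. Qed.

Definition E2 (a b : nat) : mat := fun i j => if andb (Nat.eqb i a) (Nat.eqb j b) then RtoC 1 else RtoC 0.

Lemma E2_compact a b : compact_mat (E2 a b).
Proof.
  intros eps Heps. exists (E2 a b). split.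
  - exists (S (max a b)). intros i j Hij. unfold E2.
    destruct (Nat.eqb_spec i a), (Nat.eqb_spec j b); simpl; auto; lia.
  - intros x Hx.
    assert (Z : forall i, CSeries (fun j => Cmult (Cminus (E2 a b i j) (E2 a b i j)) (x j)) = RtoC 0).
    { intros i. unfold CSeries. apply Ceq; simpl.
      - erewrite Series_ext. apply Series_zero. intros; simpl; ring.
      - erewrite Series_ext. apply Series_zero. intros; simpl; ring. }
    split; [|split].
    + intros i. split.
      * apply (ex_series_single _ 0). intros; simpl; ring.
      * apply (ex_series_single _ 0). intros; simpl; ring.
    + unfold l2. apply (ex_series_single _ 0). intros l _. rewrite Z, Cmod_0. ring.
    + unfold l2norm. erewrite Series_ext.
      2:{ intros i. rewrite Z, Cmod_0. reflexivity. }
      replace (0^2) with 0 by ring. rewrite Series_zero, sqrt_0.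
      apply Rmult_le_pos; [lra|apply sqrt_pos].
Qed.

Lemma matmul_E2 a b c i k :
  matmul (E2 a b) (E2 b c) i k = E2 a c i k.
Proof.
  unfold matmul. rewrite (CSeries_single _ b).
  - unfold E2. rewrite Nat.eqb_refl. simpl.
    destruct (Nat.eqb i a), (Nat.eqb k c); simpl; apply Ceq; simpl; ring.
  - intros l Hl. unfold E2. destruct (Nat.eqb_spec l b); [contradiction|].
    rewrite Bool.andb_false_r. apply Cmult_0_l.
Qed.

Lemma matmul_SE2 (A : mat) a b c :
  matmul (schur A (E2 a b)) (schur A (E2 b c)) a c = Cmult (A a b) (A b c).
Proof.
  unfold matmul. rewrite (CSeries_single _ b).
  - unfold schur, E2. rewrite !Nat.eqb_refl. simpl. rewrite !Cmult_1_r. reflexivity.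
  - intros l Hl. unfold schur, E2. destruct (Nat.eqb_spec l b); [contradiction|].
    rewrite Bool.andb_false_r. rewrite Cmult_0_r. apply Cmult_0_l.
Qed.

Lemma Cmult_cancel (x y : C) : x <> RtoC 0 -> x = Cmult x y -> y = RtoC 1.
Proof.
  intros Hx E. rewrite <- (Cinv_l x Hx). rewrite E at 2.
  rewrite Cmult_assoc, (Cinv_l x Hx). symmetry; apply Cmult_1_l.
Qed.

Theorem theorem4p3 (A : mat) :
  linfty A ->
  (forall T : mat, compact_mat T -> compact_mat (schur A T)) ->
  (exists T : mat, compact_mat T /\ exists i j, schur A T i j <> RtoC 0) ->
  ((forall B C : mat, compact_mat B -> compact_mat C ->
      schur A (matmul B C) = matmul (schur A B) (schur A C))
   <->
   ((exists c : nat -> C, forall i j, A i j = Cmult (c j) (A i 0%nat)) /\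
    (forall i, A i i = RtoC 1))).
Proof.
  intros _ _ [T [_ [i0 [j0 HT]]]]. split.
  - intros H.
    assert (K : forall a b c, A a c = Cmult (A a b) (A b c)).
    { intros a b c. pose proof (H _ _ (E2_compact a b) (E2_compact b c)) as E.
      apply (f_equal (fun M => M a c)) in E.
      rewrite matmul_SE2 in E. unfold schur in E at 1. rewrite matmul_E2 in E.
      unfold E2 in E. rewrite !Nat.eqb_refl in E. simpl in E.
      rewrite Cmult_1_r in E. exact E. }
    assert (Hnz : A i0 j0 <> RtoC 0).
    { intros E. apply HT. unfold schur. rewrite E. apply Cmult_0_l. }
    assert (D : forall k, A k k = RtoC 1).
    { intros k. assert (Hik : A i0 k <> RtoC 0).
      { intros E. apply Hnz. rewrite (K i0 k j0), E. apply Cmult_0_l. }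
      apply (Cmult_cancel (A i0 k)); auto. }
    split; auto. exists (fun j => A 0%nat j). intros i j.
    rewrite (K i 0%nat j). apply Cmult_comm.
  - intros [[c Hc] Hd] B C0 HB HC.
    assert (K : forall i j k, Cmult (A i j) (A j k) = A i k).
    { intros i j k. rewrite (Hc i j), (Hc j k), (Hc i k).
      specialize (Hd j). rewrite (Hc j j) in Hd.
      transitivity (Cmult (Cmult (c j) (A j 0%nat)) (Cmult (c k) (A i 0%nat))).
      - ring.
      - rewrite Hd. ring. }
    apply functional_extensionality; intros i.
    apply functional_extensionality; intros k.
    unfold schur, matmul.
    replace (fun j => Cmult (Cmult (A i j) (B i j)) (Cmult (A j k) (C0 j k)))
      with (fun j => Cmult (A i k) (Cmult (B i j) (C0 j k))).
    + symmetry. apply CSeries_scal. apply row_conv; auto. apply column_l2; auto.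
    + apply functional_extensionality; intros j. rewrite <- (K i j k). ring.
Qed.
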